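(* For every positive integer $t$ there exists an integer $L_t$ such that the following holds. Let $G$ be a finite group (not necessarily abelian, written additively) such that the smallest prime divisor $p$ of $|G|$ satisfies $p>t(2t+1)$. Let $M=[a_1^{\lambda_1},\dots,a_n^{\lambda_n}]$ be a multiset of non-identity elements of $G$ (with $a_1,\dots,a_n$ distinct) such that $\lambda_1+\lambda_2+\dots+\lambda_n\ge L_t$. Then there exists a realization $W=(w_0,\dots,w_{\lambda_1+\dots+\lambda_n})$ of $M$ such that $w_i\ne w_j$ whenever $1\le|i-j|\le t$.
   Context: $[a_1^{\lambda_1},\dots,a_n^{\lambda_n}]$ denotes the multiset containing $a_i$ with multiplicity $\lambda_i$. For a multiset $M$, $\pm M$ denotes the multiset $[x,-x : x\in M]$ (with multiplicity). A walk $W=(w_0,\dots,w_\ell)$ in $G$ has differences $\delta_i$ defined by $w_i=w_{i-1}+\delta_i$ ($1\le i\le \ell$), and $\Delta(W)=\pm[\delta_1,\dots,\delta_\ell]$. A realization of $M$ is a walk $W$ (in the Cayley graph $Cay[G:\pm M]$, vertices may repeat) with $\Delta(W)=\pm M$; equivalently, there is an ordering $(x_1,\dots,x_\ell)$ of $M$ and signs $\varepsilon_i\in\{\pm1\}$ with $w_i=w_{i-1}+\varepsilon_i x_i$. *)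

(* Defs.v *)
From mathcomp Require Import all_boot all_fingroup.
Set Implicit Arguments. Unset Strict Implicit. Unset Printing Implicit Defensive.
Local Open Scope group_scope.

(* One step of a walk: difference x with sign (true = +1, false = -1).
   The paper's additive  w_i = w_{i-1} + eps_i x_i  is rendered
   multiplicatively as  w_i = w_{i-1} * x_i^{eps_i}. *)
Definition signed_step (gT : finGroupType) (d : gT * bool) : gT :=
  if d.2 then d.1 else d.1^-1.

Definition walk_vertex (gT : finGroupType) (w0 : gT) (ds : seq (gT * bool)) (i : nat) : gT :=
  foldl (fun w d => w * signed_step d) w0 (take i ds).

Definition realizes (gT : finGroupType) (w0 : gT) (ds : seq (gT * bool)) (M : seq gT) : Prop :=
  perm_eq (map fst ds) M.

(* Main.v *)
Require Import Defs.
From mathcomp Require Import all_boot all_fingroup.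
From mathcomp Require Import cyclic zify.
From Stdlib Require Import Classical_Prop.
Set Implicit Arguments. Unset Strict Implicit. Unset Printing Implicit Defensive.
Local Open Scope group_scope.

Section Walks.
Variable gT : finGroupType.
Implicit Types (ds : seq (gT * bool)).

Definition fstep (w : gT) (d : gT * bool) := w * signed_step d.
Definition pr ds := foldl fstep 1 ds.
Definition wv ds i := walk_vertex 1 ds i.

Lemma foldl_mul w ds : foldl fstep w ds = w * pr ds.
Proof.
elim: ds w => [|d ds IH] w /=; first by rewrite /pr /= mulg1.
by rewrite /pr /= IH [foldl _ (fstep 1 d) _]IH /fstep mul1g mulgA.
Qed.

Lemma pr_cat s1 s2 : pr (s1 ++ s2) = pr s1 * pr s2.
Proof. by rewrite /pr foldl_cat -/(pr s1) foldl_mul. Qed.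

Lemma pr_cons d s : pr (d :: s) = signed_step d * pr s.
Proof. by rewrite -cat1s pr_cat /pr /= /fstep mul1g. Qed.

Lemma pr_nseq c d : pr (nseq c d) = signed_step d ^+ c.
Proof. elim: c => [|c IH] /=; first by rewrite expg0. by rewrite pr_cons IH expgS. Qed.

Lemma wvE ds i : wv ds i = pr (take i ds).
Proof. by []. Qed.

Lemma wv_cat_le s1 s2 i : (i <= size s1)%N -> wv (s1 ++ s2) i = wv s1 i.
Proof.
move=> hi; rewrite !wvE take_cat; case: ltnP => // h.
have -> : i = size s1 by apply/eqP; rewrite eqn_leq hi h.
by rewrite subnn take0 cats0 take_size.
Qed.

Lemma wv_cat_ge s1 s2 j : wv (s1 ++ s2) (size s1 + j) = pr s1 * wv s2 j.
Proof. by rewrite !wvE takeD take_size_cat // drop_size_cat // pr_cat. Qed.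

Lemma wv_size ds : wv ds (size ds) = pr ds.
Proof. by rewrite wvE take_size. Qed.

Lemma wv_nseq c d j : (j <= c)%N -> wv (nseq c d) j = signed_step d ^+ j.
Proof. by move=> h; rewrite wvE take_nseq // pr_nseq. Qed.


Section Main.
Variable t : nat.
Hypothesis ht : (0 < t)%N.
Hypothesis hp : (t * (2 * t + 1) < pdiv #|[set: gT]|)%N.

Lemma ord_ne1 (x : gT) N : x != 1 -> (0 < N)%N -> (N < pdiv #|[set: gT]|)%N -> x ^+ N != 1.
Proof.
move=> hx hN hNp; apply/negP => /eqP h.
have d1 : (#[x] %| N)%N by rewrite order_dvdn h.
have d2 : (#[x] %| #|[set: gT]|)%N by apply: order_dvdG; rewrite inE.
have h1 : (1 < #[x])%N by rewrite ltn_neqAle eq_sym order_eq1 hx order_gt0.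
have := pdiv_min_dvd h1 d2; have := dvdn_leq hN d1; lia.
Qed.

Lemma sq_inj (x y : gT) : x ^+ 2 = y ^+ 2 -> x = y.
Proof.
move=> h.
have hp' := hp; set n := #|[set: gT]| in hp' *.
have n2 : ~~ (2 %| n)%N.
  apply/negP => d; have := pdiv_min_dvd (isT : (1 < 2)%N) d; rewrite -/n; nia.
have [m hm] : exists m, n.+1 = (2 * m)%N by exists (n.+1 %/ 2); lia.
have ex (z : gT) : z = (z ^+ 2) ^+ m.
  by rewrite -(expgM z 2 m) -hm expgS expg_cardG ?inE // mulg1.
by rewrite (ex x) (ex y) h.
Qed.


Definition valid ds := forall i j, (i < j)%N -> (j <= size ds)%N -> (j - i <= t)%N ->
  wv ds i != wv ds j.
Definition Eg ds g a b a2 b2 :=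
  wv ds (g - a) * (wv ds (g + b))^-1 * wv ds (g - a2) * (wv ds (g + b2))^-1.
Definition U ds g := forall a b a2 b2, (a <= g)%N -> (a2 <= g)%N ->
  (a + b < t)%N -> (a2 + b2 < t)%N -> (0 < a + b)%N -> (0 < a2 + b2)%N ->
  (g + b <= size ds)%N -> (g + b2 <= size ds)%N -> Eg ds g a b a2 b2 != 1.

Definition ins ds g (d : gT * bool) := take g ds ++ d :: drop g ds.

Lemma ins_le ds g d i : (g <= size ds)%N -> (i <= g)%N -> wv (ins ds g d) i = wv ds i.
Proof.
move=> hg hi; rewrite /ins wv_cat_le ?size_takel //.
by rewrite !wvE take_takel.
Qed.

Lemma ins_ge ds g d j : (g <= size ds)%N ->
  wv (ins ds g d) (g + 1 + j) = wv ds g * signed_step d * (wv ds g)^-1 * wv ds (g + j).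
Proof.
move=> hg.
have sz : size (take g ds) = g by rewrite size_takel.
rewrite /ins -addnA.
have := wv_cat_ge (take g ds) (d :: drop g ds) (1 + j); rewrite sz => ->.
have := wv_cat_ge (take g ds) (drop g ds) j; rewrite sz cat_take_drop => ->.
have -> : wv ds g = pr (take g ds) by rewrite wvE.
rewrite !wvE add1n /= pr_cons.
by rewrite !mulgA mulgVK.
Qed.

Lemma size_ins ds g d : (g <= size ds)%N -> size (ins ds g d) = (size ds).+1.
Proof.
move=> hg; rewrite /ins size_cat /= size_takel // size_drop; lia.
Qed.

Definition cst ds g (d : gT * bool) := wv ds g * signed_step d * (wv ds g)^-1.

Lemma cross_valid ds g d : valid ds -> (g <= size ds)%N ->
  (forall a b, (a <= g)%N -> (a + b < t)%N -> (g + b <= size ds)%N ->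
     wv ds (g - a) != cst ds g d * wv ds (g + b)) ->
  valid (ins ds g d).
Proof.
move=> hv hg hc i j hij; rewrite size_ins // => hj hji.
case: (leqP j g) => hjg.
  by rewrite !ins_le //; [apply: hv => //; lia | lia].
have ej : j = g + 1 + (j - g.+1) by lia.
case: (leqP i g) => hig.
  rewrite ins_le // ej ins_ge //.
  have ei : i = g - (g - i) by lia.
  rewrite {1}ei; apply: hc; lia.
have ei : i = g + 1 + (i - g.+1) by lia.
rewrite ei ej !ins_ge // -/(cst ds g d).
apply/negP => /eqP /mulgI /eqP; apply/negP; apply: hv; lia.
Qed.

Lemma cst_inv ds g y : cst ds g (y, false) = (cst ds g (y, true))^-1.
Proof. by rewrite /cst /signed_step /= !invMg invgK !mulgA. Qed.

Lemma cst_eq1 ds g y s : cst ds g (y, s) = 1 -> y = 1.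
Proof.
rewrite /cst => h.
have e : signed_step (y, s) = 1.
  apply: (mulgI (wv ds g)); apply: (mulIg (wv ds g)^-1).
  by rewrite mulg1 mulgV.
move: e; rewrite /signed_step /=; clear h; case: s => //= e.
by rewrite -(invgK y) e invg1.
Qed.

Lemma insert_ok ds g y : valid ds -> U ds g -> (g <= size ds)%N -> y != 1 ->
  exists s, valid (ins ds g (y, s)).
Proof.
move=> hv hU hg hy.
case: (Classical_Prop.classic (forall a b, (a <= g)%N -> (a + b < t)%N -> (g + b <= size ds)%N ->
     wv ds (g - a) != cst ds g (y, true) * wv ds (g + b))) => H.
  by exists true; apply: cross_valid.
exists false; apply: cross_valid => // a2 b2 ha2 hab2 hgb2; apply/negP => /eqP E2.
apply: H => a b ha hab hgb; apply/negP => /eqP E1.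
have nz : forall a b s, wv ds (g - a) = cst ds g (y, s) * wv ds (g + b) -> (0 < a + b)%N.
  move=> a' b' s E; rewrite lt0n; apply/negP => /eqP h0.
  have [ea eb] : a' = 0%N /\ b' = 0%N by lia.
  move: E; rewrite ea eb subn0 addn0 => /esym; rewrite -{2}(mul1g (wv ds g)).
  by move/mulIg/(@cst_eq1 ds g y s)/eqP; rewrite (negbTE hy).
have := hU a b a2 b2 ha ha2 hab hab2 (nz _ _ _ E1) (nz _ _ _ E2) hgb hgb2.
by rewrite /Eg E1 E2 cst_inv !mulgA mulgK mulgK mulgV eqxx.
Qed.

Lemma U_transfer ds1 ds g m : (forall i, (i <= m)%N -> wv ds1 i = wv ds i) ->
  (m <= size ds)%N -> (g + t.-1 <= m)%N -> U ds g -> U ds1 g.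
Proof.
move=> he hm hgm hU a b a2 b2 ha ha2 hab hab2 p1 p2 hb hb2.
rewrite /Eg !he; try lia.
by apply: hU => //; lia.
Qed.

Lemma map_ins ds g d : map fst (ins ds g d) = take g (map fst ds) ++ d.1 :: drop g (map fst ds).
Proof. by rewrite /ins map_cat /= map_take map_drop. Qed.

Lemma absorb (Z : seq gT) : forall ds base, valid ds -> all (fun x => x != 1) Z ->
  (forall i, (i < size Z)%N -> U ds (base + i * t)%N) ->
  (base + size Z * t <= size ds)%N ->
  exists ds', valid ds' /\ perm_eq (map fst ds') (Z ++ map fst ds).
Proof.
elim: Z => [|y Z IH] ds base hv hZ hU hs.
  by exists ds; split.
move: hZ => /= /andP [hy hZ].
set g := (base + size Z * t)%N.
have hg : (g <= size ds)%N by move: hs; rewrite /= /g; nia.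
have [s hv1] := insert_ok hv (hU _ (ltnSn _)) hg hy.
set ds1 := ins ds g (y, s).
have [ds' [hv' hp']] : exists ds', valid ds' /\ perm_eq (map fst ds') (Z ++ map fst ds1).
  apply: (IH ds1 base) => //.
  - move=> i hi; apply: (@U_transfer _ ds _ g).
    + by move=> k hk; apply: ins_le.
    + exact: hg.
    + rewrite /g; nia.
    + by apply: hU; rewrite /=; lia.
  - by rewrite size_ins //; move: hs; rewrite /=; nia.
exists ds'; split => //.
rewrite (perm_trans hp') //.
rewrite /ds1 map_ins /=.
have e1 := perm_catCA (take g (map fst ds)) [:: y] (drop g (map fst ds)).
rewrite /= in e1.
apply: (@perm_trans _ (Z ++ y :: map fst ds)).
  by rewrite perm_cat2l e1 cat_take_drop.
have e2 := perm_catCA Z [:: y] (map fst ds); rewrite /= in e2.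
by rewrite e2.
Qed.

Lemma sd_ne1 (x : gT) s : x != 1 -> signed_step (x, s) != 1.
Proof.
move=> hx; rewrite /signed_step /=; case: s => //=.
by apply: contra hx => /eqP h; rewrite -(invgK x) h invg1.
Qed.

Lemma two_block (u x : gT) : u != 1 -> x != 1 -> exists s, forall a b,
  (0 < a)%N -> (0 < b)%N -> (a + b <= t)%N -> u ^+ a * signed_step (x, s) ^+ b != 1.
Proof.
move=> hu hx.
case: (classic (forall a b, (0 < a)%N -> (0 < b)%N -> (a + b <= t)%N ->
   u ^+ a * signed_step (x, true) ^+ b != 1)) => H; first by exists true.
exists false => a2 b2 ha2 hb2 hab2; apply/negP => /eqP E2.
apply: H => a b ha hb hab; apply/negP => /eqP E1.
rewrite /signed_step /= in E1 E2.
have e1 : x ^+ b = (u ^+ a)^-1.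
  by apply: (mulgI (u ^+ a)); rewrite E1 mulgV.
have e2 : x ^+ b2 = u ^+ a2.
  apply: invg_inj; rewrite -expVgn; apply: (mulgI (u ^+ a2)); by rewrite E2 mulgV.
have := expgAC x b b2; rewrite e1 e2 expVgn -!expgM => e3.
have : u ^+ (a * b2 + a2 * b)%N = 1.
  by rewrite expgD -e3 mulgV.
apply/eqP; apply: ord_ne1 => //; nia.
Qed.

Definition endsrun ds := ds = [::] \/ exists ds0 u s, u != 1 /\ ds = ds0 ++ nseq t.-1 (u, s).

Lemma run_pairs ds (x : gT) s c i j : x != 1 -> (size ds <= i)%N -> (i < j)%N ->
  (j <= size ds + c)%N -> (j - i <= t)%N ->
  wv (ds ++ nseq c (x, s)) i != wv (ds ++ nseq c (x, s)) j.
Proof.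
move=> hx hi hij hj hji.
have ei : i = (size ds + (i - size ds))%N by lia.
have ej : j = (size ds + (j - size ds))%N by lia.
rewrite ei ej !wv_cat_ge !wv_nseq; try lia.
apply/negP => /eqP /mulgI E.
have : signed_step (x, s) ^+ (j - i) = 1.
  apply: (mulgI (signed_step (x, s) ^+ (i - size ds))).
  by rewrite -expgD mulg1 E; congr (_ ^+ _); lia.
apply/eqP; apply: ord_ne1; [exact: sd_ne1 | lia | nia].
Qed.

Lemma run_append ds (x : gT) c : valid ds -> endsrun ds -> x != 1 ->
  exists s, valid (ds ++ nseq c (x, s)).
Proof.
move=> hv hend hx.
have old : forall s i j, (i < j)%N -> (j <= size ds)%N -> (j - i <= t)%N ->
    wv (ds ++ nseq c (x, s)) i != wv (ds ++ nseq c (x, s)) j.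
  by move=> s i j hij hj hji; rewrite !wv_cat_le //; try lia; apply: hv.
case: hend => [E | [ds0 [u [s0 [hu E]]]]].
  exists true => i j hij; rewrite size_cat size_nseq => hj hji.
  by apply: run_pairs => //; rewrite E.
have [s hs] := two_block (sd_ne1 s0 hu) hx.
exists s => i j hij; rewrite size_cat size_nseq => hj hji.
case: (leqP j (size ds)) => hjn; first by apply: old.
case: (leqP (size ds) i) => hin; first by apply: run_pairs.
have hsz : size ds = (size ds0 + t.-1)%N by rewrite E size_cat size_nseq.
have ei : i = (size ds0 + (i - size ds0))%N by lia.
have ej : j = (size ds + (j - size ds))%N by lia.
rewrite {1}ei ej wv_cat_le ?size_cat ?size_nseq; last by lia.
rewrite wv_cat_ge wv_nseq; last by lia.
rewrite E wv_cat_ge wv_nseq ?size_cat ?size_nseq; last by lia.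
rewrite pr_cat pr_nseq -mulgA; apply/negP => /eqP /mulgI.
set u' := signed_step (u, s0); set x' := signed_step (x, s).
have -> : u' ^+ t.-1 = u' ^+ (i - size ds0) * u' ^+ (t.-1 - (i - size ds0)).
  by rewrite -expgD; congr (_ ^+ _); lia.
rewrite -mulgA -{1}(mulg1 (u' ^+ (i - size ds0))) => /mulgI /esym /eqP.
by apply/negP; apply: hs; lia.
Qed.

Lemma chain (xs : seq (gT * nat)) : forall ds, valid ds -> endsrun ds ->
  all (fun p => (p.1 != 1) && (t.-1 <= p.2)%N) xs ->
  exists ds', valid (ds ++ ds') /\ map fst ds' = flatten [seq nseq p.2 p.1 | p <- xs]
    /\ endsrun (ds ++ ds').
Proof.
elim: xs => [|[x c] xs IH] ds hv he /=.
  by move=> _; exists [::]; rewrite cats0.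
move=> /andP [/andP [hx hc] hall].
have [s hs] := run_append c hv he hx.
have he1 : endsrun (ds ++ nseq c (x, s)).
  right; exists (ds ++ nseq (c - t.-1) (x, s)), x, s; split => //.
  by rewrite -catA -nseqD subnK.
have [ds' [hv' [hm' he']]] := IH _ hs he1 hall.
exists (nseq c (x, s) ++ ds'); rewrite catA; split => //; split => //.
by rewrite map_cat hm' map_nseq.
Qed.

Lemma run_U (z : gT) s c rest g : z != 1 -> (g + t.-1 <= c)%N ->
  U (nseq c (z, s) ++ rest) g.
Proof.
move=> hz hgc a b a2 b2 ha ha2 hab hab2 p1 p2 _ _.
set z' := signed_step (z, s).
have wz : forall i, (i <= c)%N -> wv (nseq c (z, s) ++ rest) i = z' ^+ i.
  by move=> i hi; rewrite wv_cat_le ?size_nseq // wv_nseq.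
rewrite /Eg !wz; try lia.
have k : forall a' b', (a' <= g)%N -> z' ^+ (g - a') * (z' ^+ (g + b'))^-1 = (z' ^+ (a' + b'))^-1.
  move=> a' b' h.
  have -> : (g + b' = (a' + b') + (g - a'))%N by lia.
  by rewrite expgD invMg mulKVg.
rewrite -mulgA k // k // -invMg -expgD.
rewrite eq_invg1; apply: ord_ne1; [exact: sd_ne1 | lia | nia].
Qed.

Definition PU ds g0 := forall g, (g0 < g)%N -> U ds g.

Definition wx ds (v : gT) i := if (i <= size ds)%N then wv ds i else v.

Lemma wv_rcons ds d i : wv (rcons ds d) i = wx ds (pr ds * signed_step d) i.
Proof.
rewrite /wx -cats1; case: ifP => hi; first by rewrite wv_cat_le.
have ei : i = (size ds + (i - size ds))%N by move/negbT: hi; lia.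
rewrite ei wv_cat_ge wvE; congr (_ * _).
case: (i - size ds)%N (ltac:(move/negbT: hi; lia) : (0 < i - size ds)%N) => // m _.
by rewrite /= pr_cons /pr /= mulg1.
Qed.

Definition Tup := ('I_t * 'I_t * 'I_t * 'I_t * 'I_t)%type.

Definition tg ds (tau : Tup) := ((size ds).+1 - tau.1.1.1.1)%N.

Definition Ex ds (tau : Tup) v :=
  let g := tg ds tau in
  let a := nat_of_ord tau.1.1.1.2 in let b := nat_of_ord tau.1.1.2 in
  let a2 := nat_of_ord tau.1.2 in let b2 := nat_of_ord tau.2 in
  wx ds v (g - a) * (wx ds v (g + b))^-1 * wx ds v (g - a2) * (wx ds v (g + b2))^-1.

Definition rel ds (tau : Tup) :=
  let g := tg ds tau in
  let a := nat_of_ord tau.1.1.1.2 in let b := nat_of_ord tau.1.1.2 in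
  let a2 := nat_of_ord tau.1.2 in let b2 := nat_of_ord tau.2 in
  [&& (g - a <= size ds)%N, (g - a2 <= size ds)%N, (g + b <= (size ds).+1)%N,
      (g + b2 <= (size ds).+1)%N & (size ds < g + b)%N || (size ds < g + b2)%N].

Lemma Ex_inj ds tau v u : rel ds tau -> Ex ds tau v = 1 -> Ex ds tau u = 1 -> v = u.
Proof.
case: tau => [[[[k a] b] a2] b2].
rewrite /rel /Ex /=; set g := tg _ _.
move=> /and5P [h1 h2 h3 h4 h5] ev eu; move: ev; rewrite -eu; move: eu => _.
rewrite /wx h1 h2.
case: ifP => hb; case: ifP => hb2.
- by move: h5; rewrite !ltnNge hb hb2.
- by move/mulgI/invg_inj.
- by move/mulIg/mulIg/mulgI/invg_inj.
- rewrite -!mulgA => /mulgI E.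
  have : (v^-1 * wv ds (g - a2)) ^+ 2 = (u^-1 * wv ds (g - a2)) ^+ 2.
    have E' : v^-1 * wv ds (g - a2) * v^-1 = u^-1 * wv ds (g - a2) * u^-1 by rewrite -!mulgA.
    by rewrite !expgS expg0 !mulg1 !mulgA E'.
  by move/sq_inj/mulIg/invg_inj.
Qed.

Definition sol ds (tau : Tup) := odflt 1 [pick v | rel ds tau && (Ex ds tau v == 1)].

Lemma sol_spec ds tau v : rel ds tau -> Ex ds tau v = 1 -> v = sol ds tau.
Proof.
move=> hr he; rewrite /sol; case: pickP => [u /andP [_ /eqP hu] | H] /=.
  exact: Ex_inj hr he hu.
by move: (H v); rewrite hr he eqxx.
Qed.

Definition Lbad ds := [seq wv ds i | i <- iota ((size ds).+1 - t) t] ++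
  [seq sol ds tau | tau <- enum {: Tup}].

Definition K := (t + t * t * t * t * t)%N.

Lemma size_Lbad ds : size (Lbad ds) = K.
Proof. by rewrite size_cat !size_map size_iota -enumT -cardT !card_prod !card_ord. Qed.

Lemma step_ok ds g0 d : valid ds -> PU ds g0 -> pr ds * signed_step d \notin Lbad ds ->
  valid (rcons ds d) /\ PU (rcons ds d) g0.
Proof.
move=> hv hPU hL; set v := pr ds * signed_step d.
have szr : size (rcons ds d) = (size ds).+1 by rewrite size_rcons.
split.
  move=> i j hij; rewrite szr => hj hji; rewrite !wv_rcons /wx.
  have -> : (i <= size ds)%N by lia.
  case: ifP => hjn; first by apply: hv.
  apply: contra hL => /eqP <-; rewrite mem_cat; apply/orP; left.
  by apply: map_f; rewrite mem_iota; lia.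
move=> g hg a b a2 b2 ha ha2 hab hab2 p1 p2; rewrite szr => hb hb2.
rewrite /Eg !wv_rcons.
case: (boolP ((g + b <= size ds) && (g + b2 <= size ds))%N) => [/andP [hb' hb2'] | hn].
  have h1 : (g - a <= size ds)%N by lia.
  have h2 : (g - a2 <= size ds)%N by lia.
  rewrite /wx hb' hb2' h1 h2.
  exact: hPU.
have hk : (size ds).+1 - g < t by move: hn; rewrite negb_and -!ltnNge; lia.
have ha' : a < t by lia.
have hb' : b < t by lia.
have ha2' : a2 < t by lia.
have hb2' : b2 < t by lia.
pose tau : Tup := (Ordinal hk, Ordinal ha', Ordinal hb', Ordinal ha2', Ordinal hb2').
have eg : tg ds tau = g by rewrite /tg /=; lia.
have hr : rel ds tau.
  rewrite /rel eg /=; apply/and5P; split.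
  - lia.
  - lia.
  - lia.
  - lia.
  - by move: hn; rewrite negb_and -!ltnNge.
apply/negP => /eqP E.
have : Ex ds tau v = 1 by rewrite /Ex eg /=.
move/(sol_spec hr) => ev; move/negP: hL; apply.
by rewrite -/v mem_cat ev; apply/orP; right; apply: map_f; rewrite mem_enum.
Qed.

Lemma pick_y ds (R : seq gT) : (K < size (undup R))%N ->
  exists2 y, y \in R & pr ds * y \notin Lbad ds.
Proof.
move=> hK.
set s := [seq pr ds * y | y <- undup R].
case: (boolP (all (fun x => x \in Lbad ds) s)) => [/allP sub | /allPn [x xs xn]].
  have : (size s <= size (Lbad ds))%N.
    apply: uniq_leq_size => //; rewrite map_inj_uniq ?undup_uniq //; exact: mulgI.
  by rewrite /s size_map size_Lbad leqNgt hK.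
move/mapP: xs => [y yR ex]; exists y; [by rewrite -mem_undup | by rewrite -ex].
Qed.

Lemma undup_rem (R : seq gT) y : y \in R -> (size (undup R) <= (size (undup (rem y R))).+1)%N.
Proof.
move=> yR.
have : (size (undup R) <= size (y :: undup (rem y R)))%N.
  apply: uniq_leq_size; first exact: undup_uniq.
  move=> x; rewrite mem_undup (perm_mem (perm_to_rem yR)) !inE mem_undup; done.
done.
Qed.

Lemma greedy fuel : forall (R : seq gT) ds g0, (size R <= fuel)%N ->
  all (fun x => x != 1) R -> valid ds -> PU ds g0 ->
  exists e R', [/\ perm_eq (map fst e ++ R') R, valid (ds ++ e), PU (ds ++ e) g0,
    (size (undup R') <= K)%N & (size (undup R) <= size e + K)%N].
Proof.
elim: fuel => [|fuel IH] R ds g0 hs hR hv hPU.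
  move: hs; rewrite leqn0 => /nilP ->.
  by exists [::], [::]; rewrite !cats0 /=; split.
case: (leqP (size (undup R)) K) => hK.
  by exists [::], R; rewrite !cats0; split.
have [y yR hy] := pick_y ds hK.
have [hv1 hPU1] : valid (rcons ds (y, true)) /\ PU (rcons ds (y, true)) g0.
  by apply: step_ok.
have hs1 : (size (rem y R) <= fuel)%N by rewrite size_rem //; move: hs; set n := size R; lia.
have hR1 : all (fun x => x != 1) (rem y R).
  by apply/allP => x /mem_rem xR; move/allP: hR; apply.
have [e [R' [hpm he hPe hK' hsz]]] := IH _ _ _ hs1 hR1 hv1 hPU1.
exists ((y, true) :: e), R'; rewrite -cat_rcons; split => //.
  rewrite /= perm_sym (perm_trans (perm_to_rem yR)) // perm_cons perm_sym hpm //.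
have := undup_rem yR; move: hsz; rewrite /=; set a := size (undup R); set b := size (undup (rem y R)); lia.
Qed.

Lemma perm_count (s1 s2 : seq gT) : (forall x, count_mem x s1 = count_mem x s2) -> perm_eq s1 s2.
Proof. by move=> h; rewrite /perm_eq; apply/allP => x _ /=; rewrite h. Qed.

Lemma count_flat (hv : seq gT) (f : gT -> nat) x : uniq hv ->
  count_mem x (flatten [seq nseq (f y) y | y <- hv]) = if x \in hv then f x else 0%N.
Proof.
elim: hv => [|y hv IH] //= /andP [yn u].
rewrite count_cat count_nseq IH // inE /=.
case: (eqVneq x y) => [E|ne] /=.
  by rewrite -E in yn *; rewrite (negbTE yn) mul1n addn0 mem_head.
by rewrite in_cons (negbTE ne) mul0n add0n.
Qed.

Lemma count_filter_mem (s : seq gT) (p : pred gT) x :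
  count_mem x (filter p s) = if p x then count_mem x s else 0%N.
Proof.
rewrite count_filter; case: ifP => px.
  by apply: eq_count => y /=; case: (eqVneq y x) => [->|] //=; rewrite px.
rewrite -(count_pred0 s); apply: eq_count => y /=.
by case: (eqVneq y x) => [->|] //=; rewrite px.
Qed.

Lemma sumn_le (l : seq gT) (f : gT -> nat) m : (forall x, (f x <= m)%N) ->
  (sumn (map f l) <= size l * m)%N.
Proof.
move=> h; elim: l => [|y l IH] //=.
by rewrite mulSn; apply: leq_add.
Qed.

Lemma size_bound (s : seq gT) m : (forall x, (count_mem x s <= m)%N) ->
  (size s <= size (undup s) * m)%N.
Proof.
move=> h; rewrite -(perm_size (perm_count_undup s)) size_flatten /shape -map_comp.
rewrite (eq_map (g := fun x => count_mem x s)); last by move=> x /=; rewrite size_nseq.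
exact: sumn_le.
Qed.

Lemma PU_triv ds : PU ds (size ds).
Proof. by move=> g hg a b a2 b2 _ _ _ _ _ _ hb; exfalso; move: hb hg; clear; lia. Qed.

Lemma count_le_perm (a Z P : seq gT) x : perm_eq (a ++ Z) P -> (count_mem x Z <= count_mem x P)%N.
Proof. by move/seq.permP/(_ (pred1 x)) <-; rewrite count_cat leq_addl. Qed.

Lemma valid_nil : valid [::].
Proof. by move=> i j hij /=; rewrite leqn0 => /eqP hj; move: hij; rewrite hj. Qed.

Definition Hh := t.+1.
Definition Dd := (K * Hh * t + K + 1)%N.
Definition Lb := (Dd * Dd * (t * t) + 1)%N.

Lemma caseX (M : seq gT) : all (fun x => x != 1) M -> (Dd <= size (undup M))%N ->
  exists ds, perm_eq (map fst ds) M /\ valid ds.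
Proof.
move=> hM hd.
pose hv := [seq x <- undup M | (Hh <= count_mem x M)%N].
pose light := [seq x <- M | (count_mem x M < Hh)%N].
pose P := light ++ hv.
have hvu : uniq hv by apply: filter_uniq; apply: undup_uniq.
have memhv x : (x \in hv) = (x \in M) && (Hh <= count_mem x M)%N.
  by rewrite mem_filter mem_undup andbC.
have nid x : x \in M -> x != 1 by move=> xM; move/allP: hM; apply.
have hall : all (fun p => (p.1 != 1) && (t.-1 <= p.2)%N) [seq (x, (count_mem x M - 1)%N) | x <- hv].
  rewrite all_map; apply/allP => x; rewrite memhv => /andP [xM hc] /=.
  by rewrite nid //=; move: hc; rewrite /Hh; set c := count_mem x M; lia.
have [dsc [hvc [hmc _]]] := chain valid_nil (or_introl erefl) hall.
rewrite cat0s in hvc; rewrite -map_comp in hmc.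
have hPM : perm_eq (map fst dsc ++ P) M.
  apply: perm_count => x.
  rewrite count_cat hmc count_flat // /P count_cat count_filter_mem (count_uniq_mem _ hvu) memhv.
  case: (boolP (x \in M)) => xM /=.
    by case: (leqP Hh (count_mem x M)) => h /=; move: h; rewrite /Hh; set c := count_mem x M; lia.
  by move/count_memPn: xM => ->.
have hPn : all (fun x => x != 1) P.
  apply/allP => x; rewrite mem_cat mem_filter memhv => /orP [/andP [_ xM] | /andP [xM _]]; exact: nid.
have [e [Z [hpe hve hPUe hKZ hsz]]] := greedy (leqnn (size P)) hPn hvc (@PU_triv dsc).
have dP : (size (undup M) <= size (undup P))%N.
  apply: uniq_leq_size; first exact: undup_uniq.
  move=> x; rewrite !mem_undup mem_cat mem_filter memhv => xM; rewrite xM /=.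
  by case: (ltnP (count_mem x M) Hh).
have cZ x : (count_mem x Z <= Hh)%N.
  apply: leq_trans (count_le_perm x hpe) _.
  rewrite /P count_cat count_filter_mem (count_uniq_mem _ hvu) memhv.
  case: (ltnP (count_mem x M) Hh) => h.
    by rewrite andbF addn0 ltnW.
  by rewrite andbT add0n; case: (x \in M) => //=; rewrite /Hh.
have sZ := size_bound cZ.
have hZn : all (fun x => x != 1) Z.
  apply/allP => x xZ; move/allP: hPn; apply.
  by rewrite -(perm_mem hpe) mem_cat xZ orbT.
have h1 : (size Z * t <= K * Hh * t)%N.
  by apply: leq_mul (leqnn t); apply: leq_trans sZ _; apply: leq_mul hKZ (leqnn _).
have [ds' [hv' hp']] : exists ds', valid ds' /\ perm_eq (map fst ds') (Z ++ map fst (dsc ++ e)).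
  apply: (absorb (base := (size dsc).+1)) => //.
    by move=> i hi; apply: hPUe; lia.
  rewrite size_cat; move: hsz dP hd h1; rewrite /Dd.
  set a := size (undup M); set b := size (undup P); set X := (K * Hh * t)%N.
  set y := (size Z * t)%N; set c := size e; set dd := size dsc; lia.
exists ds'; split => //.
apply: perm_count => x.
move/seq.permP: hpe => hpe'; move/seq.permP: hPM => hPM'; move/seq.permP: hp' => hp''.
have e1 := hpe' (pred1 x); have e2 := hPM' (pred1 x).
rewrite count_cat in e1; rewrite count_cat in e2.
rewrite hp'' count_cat map_cat count_cat -e2 -e1.
set u2 := count _ (map _ dsc); set u3 := count _ (map _ e); lia.
Qed.

Lemma caseY (M : seq gT) : all (fun x => x != 1) M -> (size (undup M) < Dd)%N ->
  (Lb <= size M)%N -> exists ds, perm_eq (map fst ds) M /\ valid ds.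
Proof.
move=> hM hd hL.
have nid x : x \in M -> x != 1 by move=> xM; move/allP: hM; apply.
case: (@arg_maxnP gT 1 predT (fun x => count_mem x M) isT) => z _ hz.
have hsM : (size M <= size (undup M) * count_mem z M)%N.
  by apply: size_bound => x; apply: hz.
have hc : (size (undup M) * (t * t) <= count_mem z M)%N.
  move: hsM hd hL; rewrite /Lb.
  set d := size (undup M); set c := count_mem z M; set m := size M; set T := (t * t)%N.
  move=> h1 h2 h3; case: (leqP (d * T) c) => // hlt; exfalso.
  have h4 : (d * c <= d * (d * T))%N by apply: leq_mul => //; apply: ltnW.
  have h5 : (d * (d * T) <= Dd * (Dd * T))%N by apply: leq_mul; [apply: ltnW | apply: leq_mul; [apply: ltnW|]].
  move: h4 h5; rewrite mulnA (mulnA Dd); lia.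
have d1 : (0 < size (undup M))%N.
  move: hsM hL; rewrite /Lb; set d := size (undup M); set c := count_mem z M; set m := size M.
  case: d => //=; lia.
have tT : (t <= t * t)%N by rewrite leq_pmulr.
have c1 : (t <= count_mem z M)%N.
  apply: leq_trans hc; apply: leq_trans tT _; rewrite leq_pmull //.
have zM : z \in M by rewrite -has_pred1 has_count; move: c1 ht; set c := count_mem z M; lia.
have hz1 := nid _ zM.
pose hvy x := (Hh <= count_mem x M)%N || (x == z).
pose rest := [seq x <- undup M | hvy x && (x != z)].
pose light := [seq x <- M | ~~ hvy x].
have [s hs] := run_append (count_mem z M) valid_nil (or_introl erefl) hz1.
rewrite cat0s in hs.
have he1 : endsrun (nseq (count_mem z M) (z, s)).
  right; exists (nseq (count_mem z M - t.-1) (z, s)), z, s; split => //.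
  by rewrite -nseqD subnK //; move: c1; set c := count_mem z M; lia.
have hall : all (fun p => (p.1 != 1) && (t.-1 <= p.2)%N) [seq (x, count_mem x M) | x <- rest].
  rewrite all_map; apply/allP => x; rewrite mem_filter mem_undup /hvy => /andP [/andP [h xz] xM] /=.
  rewrite nid //=; move: h; rewrite (negbTE xz) orbF /Hh; set c := count_mem x M; lia.
have [ds' [hvc [hmc _]]] := chain hs he1 hall.
rewrite -map_comp in hmc.
set dsc := nseq (count_mem z M) (z, s) ++ ds'.
have ru : uniq (z :: rest).
  by rewrite /= mem_filter eqxx andbF /=; apply: filter_uniq; apply: undup_uniq.
have hPM : perm_eq (map fst dsc ++ light) M.
  apply: perm_count => x.
  have -> : map fst dsc = flatten [seq nseq (count_mem y M) y | y <- z :: rest].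
    by rewrite /dsc map_cat map_nseq hmc.
  rewrite count_cat count_flat // count_filter_mem inE mem_filter mem_undup /hvy.
  case: (eqVneq x z) => [->|xz] /=; first by rewrite orbT /= addn0.
  rewrite orbF andbT.
  case: (boolP (x \in M)) => xM; last by move/count_memPn: xM => ->; case: (Hh <= 0)%N.
  by rewrite andbT; case: (Hh <= count_mem x M)%N; rewrite /= ?addn0.
have hln : all (fun x => x != 1) light.
  by apply/allP => x; rewrite mem_filter => /andP [_ xM]; apply: nid.
have cl x : (count_mem x light <= t)%N.
  rewrite count_filter_mem /hvy; case: ifP => //; rewrite negb_or => /andP [h _].
  by move: h; rewrite -ltnNge /Hh; set c := count_mem x M; lia.
have sl := size_bound cl.
have ul : (size (undup light) <= size (undup M))%N.
  apply: uniq_leq_size; first exact: undup_uniq.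
  by move=> x; rewrite !mem_undup mem_filter => /andP [].
have hlt : (size light * t <= count_mem z M)%N.
  apply: leq_trans hc; rewrite mulnA; apply: leq_mul => //.
  apply: leq_trans sl _; exact: leq_mul.
have [ds'' [hv'' hp'']] : exists ds'', valid ds'' /\ perm_eq (map fst ds'') (light ++ map fst dsc).
  apply: (absorb (base := 0%N)) => //.
  - by move=> i hi; rewrite add0n; apply: run_U => //; move: hi hlt ht;
      set c := count_mem z M; set l := size light; nia.
  - by rewrite add0n /dsc size_cat size_nseq; move: hlt; set c := count_mem z M;
      set l := (size light * t)%N; lia.
exists ds''; split => //.
apply: perm_count => x.
move/seq.permP: hPM => hPM'; move/seq.permP: hp'' => hp3.
have e2 := hPM' (pred1 x); rewrite count_cat in e2.
rewrite hp3 count_cat -e2.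
set u2 := count _ (map _ dsc); set u3 := count _ light; lia.
Qed.

Lemma mainL (M : seq gT) : all (fun x => x != 1) M -> (Lb <= size M)%N ->
  exists ds, perm_eq (map fst ds) M /\ valid ds.
Proof.
move=> hM hL; case: (leqP Dd (size (undup M))) => h.
  exact: caseX.
exact: caseY.
Qed.

End Main.
End Walks.

Unset Implicit Arguments.

Theorem theorem3p3 :
  forall t : nat, (0 < t)%N ->
  exists L : nat,
    forall (gT : finGroupType) (M : seq gT),
      (t * (2 * t + 1) < pdiv #|[set: gT]|)%N ->
      all (fun x => x != 1) M ->
      (L <= size M)%N ->
      exists (w0 : gT) (ds : seq (gT * bool)),
        realizes w0 ds M /\
        forall i j : nat, (i < j)%N -> (j <= size M)%N -> (j - i <= t)%N ->
          walk_vertex w0 ds i != walk_vertex w0 ds j.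
Proof.
move=> t ht; exists (Lb t) => gT M hp hM hL.
have [ds [hperm hv]] := mainL ht hp hM hL.
exists 1, ds; split; first exact: hperm.
move=> i j hij hj hji; apply: hv => //.
by rewrite -(size_map fst) (perm_size hperm).
Qed.
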